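(* Let $g=\frac{\sqrt5-1}2$, $g\le\alpha<\beta\le1$, and $(x,y)\in\Omega_\alpha$ with $y<1-\frac1{\sqrt2}$. Then $S(x,y)\cap\Omega_\beta\ne\emptyset$.
   Context: For $\alpha\in[\tfrac12,1]$: $T_\alpha(x)=\frac1x-\lfloor\frac1x+1-\alpha\rfloor$ on $[\alpha-1,\alpha)\setminus\{0\}$, $T_\alpha(0)=0$; $\mathcal T_\alpha(x,y)=\left(T_\alpha(x),\frac{1}{y+\lfloor\frac1x+1-\alpha\rfloor}\right)$ for $x\ne0$, $\mathcal T_\alpha(0,y)=(0,0)$; $\Omega_\alpha=\bigcup_{n\ge0}\overline{\mathcal T_\alpha^n([\alpha-1,\alpha)\times\{0\})}$. For a point $(x,y)$, $S(x,y)=\{(x,y),(-x,-y),(x+1,\frac{y}{1-y}),(1-x,\frac{-y}{y+1})\}$. *)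

(* Defs.v *)
From Stdlib Require Import Reals.
Open Scope R_scope.

(* floor on R: Int_part r = up r - 1 is the usual floor *)
Definition Rfloor (r : R) : R := IZR (Int_part r).

Definition digit (alpha x : R) : R := Rfloor (/ x + 1 - alpha).

(* T_alpha, totalised (only used on [alpha-1, alpha)) *)
Definition T (alpha x : R) : R :=
  if Req_EM_T x 0 then 0 else / x - digit alpha x.

Definition calT (alpha : R) (p : R * R) : R * R :=
  if Req_EM_T (fst p) 0 then (0, 0)
  else (T alpha (fst p), / (snd p + digit alpha (fst p))).

Definition img (alpha : R) (n : nat) (p : R * R) : Prop :=
  exists x, alpha - 1 <= x < alpha /\ Nat.iter n (calT alpha) (x, 0) = p.

Definition closure (A : R * R -> Prop) (p : R * R) : Prop :=
  forall eps, 0 < eps -> exists q, A q /\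
    Rabs (fst p - fst q) < eps /\ Rabs (snd p - snd q) < eps.

Definition Omega (alpha : R) (p : R * R) : Prop :=
  exists n : nat, closure (img alpha n) p.

Definition Sset (x y : R) (q : R * R) : Prop :=
  q = (x, y) \/ q = (- x, - y) \/ q = (x + 1, y / (1 - y)) \/
  q = (1 - x, - y / (y + 1)).

(* Main.v *)
Require Import Defs.
From Stdlib Require Import Reals Lra Lia Psatz Classical.
Open Scope R_scope.

Definition dg (a x : R) : Z := Int_part (/ x + 1 - a).

Lemma Int_part_unique (r : R) (k : Z) : IZR k <= r < IZR k + 1 -> Int_part r = k.
Proof.
  intros [H1 H2]. destruct (base_Int_part r) as [B1 B2].
  assert (IZR (Int_part r) < IZR (k+1)) by (rewrite plus_IZR; lra).
  assert (IZR (k - 1) < IZR (Int_part r)) by (rewrite minus_IZR; lra).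
  apply lt_IZR in H. apply lt_IZR in H0. lia.
Qed.

Lemma dgb (a x : R) : IZR (dg a x) <= / x + 1 - a < IZR (dg a x) + 1.
Proof. unfold dg. destruct (base_Int_part (/x + 1 - a)). lra. Qed.

Lemma zcase (e k : Z) : IZR k - 2 < IZR e < IZR k + 1 ->
  IZR e = IZR k \/ IZR e = IZR k - 1.
Proof.
  intros [H1 H2].
  assert (IZR (k - 2) < IZR e) by (rewrite minus_IZR; lra).
  assert (IZR e < IZR (k + 1)) by (rewrite plus_IZR; lra).
  apply lt_IZR in H. apply lt_IZR in H0.
  assert (e = k \/ e = (k - 1)%Z) as [->| ->] by lia; [left; reflexivity| right; apply minus_IZR].
Qed.

Lemma zge (d k : Z) : IZR k - 1 < IZR d -> IZR k <= IZR d.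
Proof. intros H. assert (IZR (k-1) < IZR d) by (rewrite minus_IZR; lra).
  apply lt_IZR in H0. apply IZR_le. lia. Qed.

Lemma zle (d k : Z) : IZR d < IZR k + 1 -> IZR d <= IZR k.
Proof. intros H. assert (IZR d < IZR (k+1)) by (rewrite plus_IZR; lra).
  apply lt_IZR in H0. apply IZR_le. lia. Qed.

Lemma calT_eq (a x y : R) : x <> 0 ->
  calT a (x, y) = (/ x - IZR (dg a x), / (y + IZR (dg a x))).
Proof.
  intros Hx. unfold calT, T, digit, Rfloor, dg; simpl.
  destruct (Req_EM_T x 0); [contradiction|reflexivity].
Qed.

Lemma calT_0 (a y : R) : calT a (0, y) = (0, 0).
Proof. unfold calT; simpl. destruct (Req_EM_T 0 0); [reflexivity| contradiction]. Qed.

Lemma T_range (a x : R) : x <> 0 -> a - 1 <= / x - IZR (dg a x) < a.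
Proof. intros. pose proof (dgb a x). lra. Qed.

Lemma calT_range (a : R) (p : R * R) : 0 < a <= 1 -> a - 1 <= fst (calT a p) < a.
Proof.
  intros Ha. destruct p as [x y]. destruct (Req_EM_T x 0) as [->|Hx].
  - rewrite calT_0. simpl. lra.
  - rewrite calT_eq by auto. simpl. apply T_range; auto.
Qed.

Lemma F1 (al be x : R) : 0 < be - al < 1 ->
  IZR (dg be x) = IZR (dg al x) \/ IZR (dg be x) = IZR (dg al x) - 1.
Proof.
  intros H. pose proof (dgb al x). pose proof (dgb be x).
  apply zcase. lra.
Qed.

Lemma F2 (al be x : R) : x <> 0 -> 1 < al + be <= 2 ->
  IZR (dg be (-x)) = - IZR (dg al x) \/ IZR (dg be (-x)) = - IZR (dg al x) - 1.
Proof.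
  intros Hx H. pose proof (dgb al x). pose proof (dgb be (-x)).
  rewrite Rinv_opp in H1. rewrite <- opp_IZR. apply zcase. rewrite opp_IZR. lra.
Qed.

Lemma F3 (al be x z : R) : / z = - / x - 1 -> 1 < al + be <= 2 ->
  IZR (dg be z) = - IZR (dg al x) - 1 \/ IZR (dg be z) = - IZR (dg al x) - 2.
Proof.
  intros Hz H. pose proof (dgb al x). pose proof (dgb be z).
  rewrite Hz in H1.
  destruct (zcase (dg be z) (- dg al x - 1)%Z) as [E|E];
    rewrite ?minus_IZR, ?opp_IZR in *; [lra| left; lra| right; lra].
Qed.

Lemma F4 (al be x z : R) : / z = / x - 1 -> 0 < be - al < 1 ->
  IZR (dg be z) = IZR (dg al x) - 1 \/ IZR (dg be z) = IZR (dg al x) - 2.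
Proof.
  intros Hz H. pose proof (dgb al x). pose proof (dgb be z).
  rewrite Hz in H1.
  destruct (zcase (dg be z) (dg al x - 1)%Z) as [E|E];
    rewrite ?minus_IZR in *; [lra| left; lra| right; lra].
Qed.

Lemma pos_digit (a x : R) : 0 < x < a -> a <= 1 -> 1 <= IZR (dg a x).
Proof.
  intros H Ha. pose proof (dgb a x).
  assert (x * / x = 1) by (field; lra).
  assert (1 < / x) by nra.
  apply (zge _ 1). lra.
Qed.

Lemma neg_digit (a x : R) : a - 1 <= x < 0 -> 0 < a -> 1 <= a * a + a ->
  IZR (dg a x) <= -3.
Proof.
  intros H Ha Hg. pose proof (dgb a x).
  assert (x * / x = 1) by (field; lra).
  assert (/ x < 0) by (apply Rinv_lt_0_compat; lra).
  assert (1 <= (a - 1) * / x) by nra.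
  assert (/ x + 1 - a < -2) by nra.
  apply (zle _ (-3)). lra.
Qed.

Lemma s2_facts : sqrt 2 * sqrt 2 = 2 /\ 1.414 < sqrt 2 < 1.415.
Proof.
  assert (H : sqrt 2 * sqrt 2 = 2) by (apply sqrt_sqrt; lra).
  assert (0 <= sqrt 2) by apply sqrt_pos.
  split; [exact H|]. split; nra.
Qed.

Definition Rg (a : R) (p : R * R) : Prop :=
  a - 1 <= fst p < a /\ -(sqrt 2 - 1) <= snd p <= sqrt 2 /\
  (2 - sqrt 2 < snd p -> 1 - a < a * fst p) /\
  (snd p < sqrt 2 / 2 - 1 -> fst p * (2 + a) <= 1).

Lemma Rg_init (a x : R) : 0 < a < 1 -> a - 1 <= x < a -> Rg a (x, 0).
Proof.
  intros Ha Hx. destruct s2_facts as [S1 S2]. unfold Rg; simpl.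
  repeat split; try lra.
Qed.

Lemma Rg_step (a : R) (p : R * R) : 0 < a < 1 -> 1 <= a * a + a ->
  Rg a p -> Rg a (calT a p).
Proof.
  intros Ha Hg HR. destruct s2_facts as [S1 S2]. set (s := sqrt 2) in *.
  destruct p as [x y]. unfold Rg in HR; simpl in HR. fold s in HR.
  destruct HR as [Hx [Hy [Hhi Hlo]]].
  destruct (Req_EM_T x 0) as [->|Hx0].
  { rewrite calT_0. unfold Rg; simpl. fold s. repeat split; lra. }
  rewrite calT_eq by auto. pose proof (T_range a x Hx0) as TR.
  pose proof (dgb a x) as DB.
  remember (IZR (dg a x)) as d eqn:Ed. remember (/ x) as r eqn:Er.
  assert (xr : x * r = 1) by (rewrite Er; field; auto).
  unfold Rg; simpl; fold s. split; [exact TR|].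
  destruct (Rlt_dec 0 x) as [Hpos|Hneg].
  - assert (Hd1 : 1 <= d) by (rewrite Ed; apply pos_digit; lra).
    assert (ar : 1 < a * r) by nra.
    destruct (Rle_dec d 1) as [Hd|Hd].
    + assert (d = 1) by lra.
      assert (x * (2 + a) > 1) by nra.
      assert (Hy2 : s / 2 - 1 <= y) by (destruct (Rlt_dec y (s/2 - 1)); [specialize (Hlo r0); lra | lra]).
      rewrite H.
      assert (w1 : (y + 1) * / (y + 1) = 1) by (field; lra).
      assert (0 < / (y + 1)) by (apply Rinv_0_lt_compat; lra).
      repeat split; try nra.
    + assert (Hd2 : 2 <= d) by (rewrite Ed; apply (zge _ 2); rewrite <- Ed; lra).
      assert (Hyd : 1 + s / 2 <= y + d).
      { destruct (Rlt_dec y (s/2 - 1)) as [Hl|Hl].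
        - specialize (Hlo Hl). assert (r >= 2 + a) by nra.
          assert (3 <= d) by (rewrite Ed; apply (zge _ 3); rewrite <- Ed; lra). lra.
        - lra. }
      assert (w1 : (y + d) * / (y + d) = 1) by (field; lra).
      assert (0 < / (y + d)) by (apply Rinv_0_lt_compat; lra).
      assert (/ (y + d) <= 2 - s) by nra.
      repeat split; intros; lra.
  - assert (Hxn : x < 0) by (destruct (Rtotal_order x 0) as [h|[h|h]]; lra).
    assert (Hd : d <= -3) by (rewrite Ed; apply neg_digit; lra).
    assert (Hy2 : y <= 2 - s) by (destruct (Rlt_dec (2 - s) y); [specialize (Hhi r0); nra | lra]).
    assert (w1 : (y + d) * / (y + d) = 1) by (field; lra).
    assert (/ (y + d) < 0) by (apply Rinv_lt_0_compat; lra).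
    assert (-(s - 1) <= / (y + d)) by nra.
    repeat split; try lra.
    intros Hw.
    assert (y + d > -(2 + s)) by nra.
    assert (d = -3) by (assert (-3 <= d) by (rewrite Ed; apply (zge _ (-3)); rewrite <- Ed; lra); lra).
    rewrite H2.
    assert (r < 0) by nra.
    assert (1 <= (a - 1) * r) by nra.
    set (t := - r) in *.
    assert (r = - t) by (unfold t; ring).
    rewrite H5 in *.
    nra.
Qed.

Lemma idM3 (u : R) : u <> 0 -> u <> 1 -> / (u - 1) = / u / (1 - / u).
Proof. intros. field. split; auto. intro. apply H0. lra. Qed.

Lemma idM4 (u : R) : u <> 0 -> u <> -1 -> / (- u - 1) = - / u / (/ u + 1).
Proof. intros. field. split; auto. split; [|intro; apply H0; lra]. intro; apply H0; lra. Qed.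

Definition Hyp (al be : R) := 0 < al /\ al < be /\ be <= 1 /\ 1 <= al * al + al.

Lemma Hyp_cons (al be : R) : Hyp al be ->
  0.618 < al /\ 1 < al + be <= 2 /\ 0 < be - al < 1 /\ 1 <= be * be + be /\ al < 1.
Proof. intros [H1 [H2 [H3 H4]]]. assert (0.618 < al) by nra. repeat split; nra. Qed.

Lemma ubound (al x y : R) : 0 < al < 1 -> 1 <= al * al + al -> Rg al (x, y) -> x <> 0 ->
  (1 <= IZR (dg al x) /\ 2 - sqrt 2 <= y + IZR (dg al x)) \/
  (IZR (dg al x) <= -3 /\ y + IZR (dg al x) <= sqrt 2 - 3).
Proof.
  intros Ha Hg [Hx [Hy _]] Hx0. simpl in *.
  destruct (Rlt_dec 0 x).
  - left. assert (1 <= IZR (dg al x)) by (apply pos_digit; lra). lra.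
  - right. assert (IZR (dg al x) <= -3) by (apply neg_digit; try lra;
      destruct (Rtotal_order x 0) as [h|[h|h]]; lra). lra.
Qed.

Lemma lab1 (al be x y : R) : Hyp al be -> Rg al (x, y) -> x <> 0 -> be - 1 <= x < be ->
  Sset (/ x - IZR (dg al x)) (/ (y + IZR (dg al x))) (calT be (x, y)).
Proof.
  intros H HR Hx0 Hq. destruct (Hyp_cons _ _ H) as [C1 [C2 [C3 [C4 C5]]]].
  destruct s2_facts as [S1 S2].
  assert (HU := ubound al x y ltac:(destruct H; lra) ltac:(destruct H as [_ [_ [_ h]]]; exact h) HR Hx0).
  destruct H as [Ha [Hab [Hb Hg]]].
  rewrite calT_eq by auto. unfold Sset.
  destruct (F1 al be x C3) as [E|E]; rewrite E.
  - left. reflexivity.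
  - right; right; left. f_equal; [ring|].
    replace (y + (IZR (dg al x) - 1)) with ((y + IZR (dg al x)) - 1) by ring.
    apply idM3.
    + destruct HU; intro; lra.
    + destruct HR as [HRx [HRy _]]; simpl in HRx, HRy.
      destruct (Rlt_dec 0 x).
      * assert (1 <= IZR (dg be x)) by (apply pos_digit; lra). destruct HU; intro; lra.
      * assert (IZR (dg al x) <= -3) by (apply neg_digit; try lra;
          destruct (Rtotal_order x 0) as [h|[h|h]]; lra).
        intro; lra.
Qed.

Lemma lab2 (al be x y : R) : Hyp al be -> Rg al (x, y) -> x <> 0 ->
  Sset (/ x - IZR (dg al x)) (/ (y + IZR (dg al x))) (calT be (-x, -y)).
Proof.
  intros H HR Hx0. destruct (Hyp_cons _ _ H) as [C1 [C2 [C3 [C4 C5]]]].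
  destruct s2_facts as [S1 S2].
  assert (HU := ubound al x y ltac:(destruct H; lra) ltac:(destruct H as [_ [_ [_ h]]]; exact h) HR Hx0).
  destruct H as [Ha [Hab [Hb Hg]]].
  rewrite calT_eq by lra. unfold Sset.
  destruct (F2 al be x Hx0 C2) as [E|E]; rewrite E.
  - right; left. rewrite Rinv_opp. f_equal; [ring|].
    replace (- y + - IZR (dg al x)) with (- (y + IZR (dg al x))) by ring.
    apply Rinv_opp.
  - right; right; right. rewrite Rinv_opp. f_equal; [ring|].
    replace (- y + (- IZR (dg al x) - 1)) with (- (y + IZR (dg al x)) - 1) by ring.
    apply idM4; destruct HU; intro; lra.
Qed.

Lemma L3core (al be x y : R) : Hyp al be -> x <> 0 -> x + 1 <> 0 ->
  y + IZR (dg al x) <> 0 -> y + IZR (dg al x) <> -1 ->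
  Sset (/ x - IZR (dg al x)) (/ (y + IZR (dg al x))) (calT be (/ (x + 1) - 1, 1 - y)).
Proof.
  intros H Hx0 Hx1 U0 U1. destruct (Hyp_cons _ _ H) as [C1 [C2 [C3 [C4 C5]]]].
  assert (Hz : / (x + 1) - 1 <> 0).
  { intro E. assert (/ (x+1) = 1) by lra.
    assert (x + 1 = 1). { rewrite <- (Rinv_inv (x+1)). rewrite H0. lra. } lra. }
  assert (Iz : / (/ (x + 1) - 1) = - / x - 1).
  { assert (E1 : / (x + 1) - 1 = - x / (x + 1)) by (field; auto).
    rewrite E1. field. split; auto. }
  rewrite calT_eq by auto. unfold Sset.
  destruct (F3 al be x _ Iz C2) as [E|E]; rewrite E, Iz.
  - right; left. f_equal; [ring|].
    replace (1 - y + (- IZR (dg al x) - 1)) with (- (y + IZR (dg al x))) by ring.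
    apply Rinv_opp.
  - right; right; right. f_equal; [ring|].
    replace (1 - y + (- IZR (dg al x) - 2)) with (- (y + IZR (dg al x)) - 1) by ring.
    apply idM4; auto.
Qed.
Lemma inv_s2 : 1 / sqrt 2 = sqrt 2 / 2.
Proof.
  assert (S1 : sqrt 2 * sqrt 2 = 2) by (apply sqrt_sqrt; lra).
  assert (0 < sqrt 2) by (apply sqrt_lt_R0; lra).
  field_simplify_eq; [nra| lra].
Qed.

Lemma lab3 (al be x y : R) : Hyp al be -> Rg al (x, y) -> x <> 0 -> be - 1 <= x + 1 < be ->
  Sset (/ x - IZR (dg al x)) (/ (y + IZR (dg al x)))
    (calT be (calT be (x + 1, y / (1 - y)))).
Proof.
  intros H HR Hx0 Hq. destruct (Hyp_cons _ _ H) as [C1 [C2 [C3 [C4 C5]]]].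
  destruct s2_facts as [S1 S2].
  assert (HU := ubound al x y ltac:(destruct H; lra) ltac:(destruct H as [_ [_ [_ h]]]; exact h) HR Hx0).
  pose proof HR as HR'.
  destruct HR' as [HRx [HRy [HRhi _]]]; simpl in HRx, HRy, HRhi.
  pose proof H as H'. destruct H' as [Ha [Hab [Hb Hg]]].
  assert (Hxn : x < 0) by lra.
  assert (Hy2 : y <= 2 - sqrt 2).
  { destruct (Rlt_dec (2 - sqrt 2) y) as [h|h]; [specialize (HRhi h); nra | lra]. }
  assert (D1 : dg be (x + 1) = 1%Z).
  { unfold dg. apply Int_part_unique.
    assert (xv : (x + 1) * / (x + 1) = 1) by (field; lra).
    assert (0 < / (x + 1)) by (apply Rinv_0_lt_compat; lra).
    split; nra. }
  rewrite calT_eq by lra. rewrite D1.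
  replace (/ (y / (1 - y) + IZR 1)) with (1 - y).
  2:{ replace (y / (1 - y) + IZR 1) with (/ (1 - y)) by (simpl; field; lra).
      rewrite Rinv_inv. reflexivity. }
  replace (/ (x + 1) - IZR 1) with (/ (x + 1) - 1) by reflexivity.
  apply L3core; auto; try lra; destruct HU; intro; lra.
Qed.

Lemma lab4 (al be x y : R) : Hyp al be -> Rg al (x, y) -> x <> 0 -> be - 1 <= 1 - x < be ->
  let q := (1 - x, - y / (y + 1)) in
  let p1 := (/ x - IZR (dg al x), / (y + IZR (dg al x))) in
  let p2 := calT al p1 in
  Sset (fst p1) (snd p1) (calT be q) \/ Sset (fst p1) (snd p1) (calT be (calT be q)) \/
  (1 - 1 / sqrt 2 <= snd p1 /\
   (fst p1 = 0 \/ Sset (fst p2) (snd p2) (calT be q) \/ Sset (fst p2) (snd p2) (calT be (calT be q)))).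
Proof.
  intros H HR Hx0 Hq q p1 p2. destruct (Hyp_cons _ _ H) as [C1 [C2 [C3 [C4 C5]]]].
  destruct s2_facts as [S1 S2].
  assert (HU := ubound al x y ltac:(destruct H; lra) ltac:(destruct H as [_ [_ [_ h]]]; exact h) HR Hx0).
  pose proof HR as HR'.
  destruct HR' as [HRx [HRy [HRhi _]]]; simpl in HRx, HRy, HRhi.
  pose proof H as H'. destruct H' as [Ha [Hab [Hb Hg]]].
  assert (Hxp : 0 < x) by lra.
  assert (Hd1 : 1 <= IZR (dg al x)) by (apply pos_digit; lra).
  assert (xr : x * / x = 1) by (field; lra).
  assert (0 < / x) by (apply Rinv_0_lt_compat; lra).
  assert (w1 : (1 - x) * / (1 - x) = 1) by (field; lra).
  assert (0 < / (1 - x)) by (apply Rinv_0_lt_compat; lra).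
  pose proof (dgb be (1 - x)) as DB1. pose proof (dgb al x) as DBa.
  assert (He1 : 1 <= IZR (dg be (1 - x))) by (apply pos_digit; lra).
  pose proof (T_range be (1 - x) ltac:(lra)) as TR1.
  unfold q. rewrite (calT_eq be (1 - x)) by lra.
  destruct (Rlt_dec (IZR (dg be (1 - x))) 2) as [Hlt|Hge].
  -
    assert (E1 : IZR (dg be (1 - x)) = 1) by (assert (IZR (dg be (1 - x)) <= 1) by (apply zle; lra); lra).
    rewrite E1 in *.
    replace (/ (- y / (y + 1) + 1)) with (y + 1).
    2:{ replace (- y / (y + 1) + 1) with (/ (y + 1)) by (field; lra). rewrite Rinv_inv; reflexivity. }
    set (z := / (1 - x) - 1) in *.
    assert (Iz : / z = / x - 1).
    { unfold z. replace (/ (1 - x) - 1) with (x / (1 - x)) by (field; lra). field; lra. }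
    assert (Hz : 0 < z).
    { unfold z. replace (/ (1 - x) - 1) with (x * / (1 - x)) by (field; lra). nra. }
    right; left. rewrite calT_eq by lra.
    unfold p1; simpl; unfold Sset.
    destruct (F4 al be x z Iz C3) as [E|E]; rewrite E, Iz.
    + left. f_equal; [ring|]. f_equal; ring.
    + right; right; left. f_equal; [ring|].
      assert (1 <= IZR (dg be z)) by (apply pos_digit; lra).
      replace (y + 1 + (IZR (dg al x) - 2)) with ((y + IZR (dg al x)) - 1) by ring.
      apply idM3; intro; lra.
  -
    right; right.
    assert (Hw : 1 + be <= / (1 - x)) by lra.
    assert (Hxb : (1 - x) * (1 + be) <= 1).
    { apply Rle_trans with ((1 - x) * / (1 - x)); [apply Rmult_le_compat_l; lra| lra]. }
    assert (Hrb : be * / x <= 1 + be).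
    { assert (be <= x * (1 + be)) by lra.
      assert (HH : be * / x <= x * (1 + be) * / x) by (apply Rmult_le_compat_r; lra).
      replace (x * (1 + be) * / x) with (1 + be) in HH by (field; lra). exact HH. }
    assert (Hr2 : / x < 2 + al).
    { assert (K : 1 + be < be * (2 + al)).
      { assert (al * (1 + al) < be * (1 + al)) by (apply Rmult_lt_compat_r; lra). lra. }
      apply Rnot_le_lt. intro Hc.
      assert (be * (2 + al) <= be * / x) by (apply Rmult_le_compat_l; lra). lra. }
    assert (Hd2 : IZR (dg al x) <= 2) by (apply zle; lra).
    assert (Hyd : 0 < y + IZR (dg al x) <= sqrt 2 + 2) by lra.
    assert (u1 : (y + IZR (dg al x)) * / (y + IZR (dg al x)) = 1) by (field; lra).
    split.
    { unfold p1; simpl. rewrite inv_s2.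
      assert (K : (1 - sqrt 2 / 2) * (sqrt 2 + 2) = 1) by nra.
      set (u := y + IZR (dg al x)) in *. set (w := / u) in *.
      apply Rnot_lt_le; intro Hc.
      assert (u * w < u * (1 - sqrt 2 / 2)) by (apply Rmult_lt_compat_l; lra).
      assert (u * (1 - sqrt 2 / 2) <= (sqrt 2 + 2) * (1 - sqrt 2 / 2)) by (apply Rmult_le_compat_r; lra).
      lra. }
    destruct (Req_EM_T (fst p1) 0) as [Z|Z]; [left; exact Z| right].
    unfold p2, p1 in *; simpl in Z |- *.
    set (x' := / x - IZR (dg al x)) in *.
    pose proof (T_range al x Hx0) as TRa. fold x' in TRa.
    rewrite (calT_eq al x') by auto.
    destruct (Rlt_dec (IZR (dg al x)) 2) as [Hd|Hd].
    +
      assert (D : IZR (dg al x) = 1) by (assert (IZR (dg al x) <= 1) by (apply zle; lra); lra).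
      assert (X' : x' = / x - 1) by (unfold x'; rewrite D; ring).
      assert (Wid : / (1 - x) = 1 + / x').
      { rewrite X'. replace (/ x - 1) with ((1 - x) / x) by (field; lra). field; lra. }
      pose proof (dgb be x') as DB'.
      assert (E1 : dg be (1 - x) = (dg be x' + 1)%Z).
      { unfold dg at 1. apply Int_part_unique. rewrite plus_IZR. rewrite Wid. lra. }
      rewrite E1, plus_IZR. left.
      assert (Hy' : / (y + IZR (dg al x)) = / (y + 1)) by (rewrite D; reflexivity).
      assert (0 < / (y + 1)) by (apply Rinv_0_lt_compat; lra).
      rewrite Hy'. unfold Sset; simpl.
      destruct (F1 al be x' C3) as [E|E]; rewrite E.
      * left. f_equal; [rewrite Wid; ring|]. f_equal. field. lra.
      * right; right; left. f_equal; [rewrite Wid; ring|].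
        assert (1 <= IZR (dg be x')) by (rewrite E1, plus_IZR in Hge; lra).
        replace (- y / (y + 1) + (IZR (dg al x') - 1 + 1)) with ((/ (y + 1) + IZR (dg al x')) - 1) by (field; lra).
        apply idM3; intro; lra.
    +
      assert (D : IZR (dg al x) = 2) by lra.
      assert (X' : x' = / x - 2) by (unfold x'; rewrite D; ring).
      assert (Hr1 : 1 + al <= / x) by lra.
      assert (v1 : (x' + 1) * / (x' + 1) = 1) by (field; lra).
      assert (0 < / (x' + 1)) by (apply Rinv_0_lt_compat; lra).
      assert (Wid : / (1 - x) = 1 + / (x' + 1)).
      { rewrite X'. replace (/ x - 2 + 1) with ((1 - x) / x) by (field; lra). field; lra. }
      assert (E1 : dg be (1 - x) = 2%Z).
      { unfold dg. apply Int_part_unique. rewrite Wid.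
        assert (Hx1 : be * (x' + 1) <= 1).
        { rewrite X'. replace (be * (/ x - 2 + 1)) with (be * / x - be) by ring. lra. }
        assert (Hx2 : al <= x' + 1) by (rewrite X'; lra).
        assert (be <= / (x' + 1)).
        { apply Rnot_lt_le; intro Hc.
          assert ((x' + 1) * / (x' + 1) < (x' + 1) * be) by (apply Rmult_lt_compat_l; lra). lra. }
        assert (/ (x' + 1) < 1 + be).
        { apply Rnot_le_lt; intro Hc.
          assert (al * (1 + be) <= (x' + 1) * / (x' + 1)).
          { apply Rle_trans with ((x' + 1) * (1 + be)); [apply Rmult_le_compat_r; lra| apply Rmult_le_compat_l; lra]. }
          assert (al * (1 + al) < al * (1 + be)) by (apply Rmult_lt_compat_l; lra). lra. }
        simpl. lra. }
      rewrite E1. right.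
      replace (/ (1 - x) - IZR 2) with (/ (x' + 1) - 1) by (rewrite Wid; simpl; ring).
      replace (/ (- y / (y + 1) + IZR 2)) with (1 - / (y + IZR (dg al x))).
      2:{ rewrite D. replace (- y / (y + 1) + IZR 2) with ((y + 2) / (y + 1)) by (simpl; field; lra).
          field. lra. }
      assert (0 < / (y + IZR (dg al x)) < 1) by (rewrite D; split; [apply Rinv_0_lt_compat; lra| rewrite <- Rinv_1; apply Rinv_lt_contravar; lra]).
      apply L3core; auto; try lra.
      * destruct (Rlt_dec 0 x') as [h|h].
        -- assert (1 <= IZR (dg al x')) by (apply pos_digit; lra). intro; lra.
        -- assert (IZR (dg al x') <= -3) by (apply neg_digit; try lra;
             destruct (Rtotal_order x' 0) as [h'|[h'|h']]; lra). intro; lra.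
      * destruct (Rlt_dec 0 x') as [h|h].
        -- assert (1 <= IZR (dg al x')) by (apply pos_digit; lra). intro; lra.
        -- assert (IZR (dg al x') <= -3) by (apply neg_digit; try lra;
             destruct (Rtotal_order x' 0) as [h'|[h'|h']]; lra). intro; lra.
Qed.

Lemma step (al be : R) (p q : R * R) : Hyp al be -> Rg al p -> fst p <> 0 ->
  be - 1 <= fst q < be -> Sset (fst p) (snd p) q ->
  Sset (fst (calT al p)) (snd (calT al p)) (calT be q) \/
  Sset (fst (calT al p)) (snd (calT al p)) (calT be (calT be q)) \/
  (1 - 1 / sqrt 2 <= snd (calT al p) /\
   (fst (calT al p) = 0 \/
    Sset (fst (calT al (calT al p))) (snd (calT al (calT al p))) (calT be q) \/
    Sset (fst (calT al (calT al p))) (snd (calT al (calT al p))) (calT be (calT be q)))).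
Proof.
  intros H HR Hx0 Hq HS. destruct p as [x y]. simpl in Hx0, HS.
  rewrite (calT_eq al x y Hx0). simpl.
  destruct HS as [E|[E|[E|E]]]; subst q; simpl in Hq.
  - left. apply lab1; auto.
  - left. apply lab2; auto.
  - right; left. apply lab3; auto.
  - apply (lab4 al be x y H HR Hx0 Hq).
Qed.

Definition orbit (al x0 : R) (k : nat) : R * R := Nat.iter k (calT al) (x0, 0).

Lemma orbit_Rg (al be x0 : R) (k : nat) : Hyp al be -> al - 1 <= x0 < al -> Rg al (orbit al x0 k).
Proof.
  intros H Hx. destruct (Hyp_cons _ _ H) as [C1 [C2 [C3 [C4 C5]]]].
  destruct H as [Ha [Hab [Hb Hg]]].
  induction k as [|k IH].
  - apply Rg_init; lra.
  - unfold orbit; simpl. apply Rg_step; auto; lra.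
Qed.

Lemma img_range (be : R) (m : nat) (q : R * R) : 0 < be <= 1 -> img be m q -> be - 1 <= fst q < be.
Proof.
  intros Hb [z [Hz E]]. subst q. destruct m as [|m].
  - simpl. exact Hz.
  - simpl. apply calT_range; auto.
Qed.

Lemma img_step (be : R) (m : nat) (q : R * R) : img be m q -> img be (S m) (calT be q).
Proof. intros [z [Hz E]]. exists z. split; auto. simpl. rewrite E. reflexivity. Qed.

Definition PP (al be x0 : R) (k : nat) : Prop :=
  exists q m, Sset (fst (orbit al x0 k)) (snd (orbit al x0 k)) q /\ (m <= 2 * k)%nat /\ img be m q.

Lemma PP_zero (al be x0 : R) (k : nat) : 0 < be <= 1 -> fst (orbit al x0 k) = 0 -> PP al be x0 (S k).
Proof.
  intros Hb E. exists (0, 0), 0%nat. split; [|split; [lia|]].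
  - change (orbit al x0 (S k)) with (calT al (orbit al x0 k)).
    destruct (orbit al x0 k) as [u v]. simpl in E. subst u. rewrite calT_0. left. reflexivity.
  - exists 0. split; [lra| reflexivity].
Qed.

Lemma main_Q (al be x0 : R) (k : nat) : Hyp al be -> al - 1 <= x0 < al ->
  PP al be x0 k \/ (1 - 1 / sqrt 2 <= snd (orbit al x0 k) /\ PP al be x0 (S k)).
Proof.
  intros H Hx. pose proof H as H'. destruct H' as [Ha [Hab [Hb Hg]]].
  assert (Hb' : 0 < be <= 1) by lra.
  induction k as [|k IH].
  - left. destruct (Rle_dec (be - 1) x0) as [h|h].
    + exists (x0, 0), 0%nat. split; [left; reflexivity| split; [lia|]].
      exists x0. split; [lra| reflexivity].
    + exists (x0 + 1, 0), 0%nat. split; [|split; [lia|]].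
      * right; right; left. simpl. f_equal. field.
      * exists (x0 + 1). split; [lra| reflexivity].
  - destruct IH as [[q [m [HS [Hm Hi]]]] | [_ HP]]; [| left; exact HP].
    destruct (Req_EM_T (fst (orbit al x0 k)) 0) as [Z|Z].
    { left. apply PP_zero; auto. }
    pose proof (img_range be m q Hb' Hi) as Hq.
    destruct (step al be (orbit al x0 k) q H (orbit_Rg al be x0 k H Hx) Z Hq HS)
      as [A|[B|[Cc [Z1|[C1|C2]]]]].
    + left. exists (calT be q), (S m). split; [exact A| split; [lia| apply img_step; auto]].
    + left. exists (calT be (calT be q)), (S (S m)). split; [exact B| split; [lia| apply img_step, img_step; auto]].
    + right. split; [exact Cc|]. apply PP_zero; auto.
    + right. split; [exact Cc|].
      exists (calT be q), (S m). split; [exact C1| split; [lia| apply img_step; auto]].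
    + right. split; [exact Cc|].
      exists (calT be (calT be q)), (S (S m)). split; [exact C2| split; [lia| apply img_step, img_step; auto]].
Qed.

Lemma main_orbit (al be x0 : R) (k : nat) : Hyp al be -> al - 1 <= x0 < al ->
  snd (orbit al x0 k) < 1 - 1 / sqrt 2 -> PP al be x0 k.
Proof.
  intros H Hx Hy. destruct (main_Q al be x0 k H Hx) as [P|[C _]]; [exact P| lra].
Qed.

Lemma unif (F : nat -> R -> Prop) :
  (forall m e e', 0 < e' <= e -> F m e -> F m e') ->
  forall N, (forall m, (m <= N)%nat -> exists e, 0 < e /\ F m e) ->
  exists e, 0 < e /\ forall m, (m <= N)%nat -> F m e.
Proof.
  intros Hmon N. induction N as [|N IH]; intros Hall.
  - destruct (Hall 0%nat (le_n 0)) as [e [He Fe]]. exists e. split; auto.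
    intros m Hm. assert (m = 0%nat) by lia. subst. exact Fe.
  - destruct IH as [e1 [He1 F1]]. { intros m Hm. apply Hall. lia. }
    destruct (Hall (S N) (le_n _)) as [e2 [He2 F2]].
    exists (Rmin e1 e2). split; [apply Rmin_pos; auto|].
    intros m Hm. destruct (Nat.eq_dec m (S N)) as [->|Hne].
    + apply (Hmon _ e2); auto. split; [apply Rmin_pos; auto| apply Rmin_r].
    + apply (Hmon _ e1); [split; [apply Rmin_pos; auto| apply Rmin_l]|]. apply F1. lia.
Qed.

Lemma frac_lt (A B e : R) : 0 < B -> A < e * B -> A * / B < e.
Proof.
  intros HB H. apply (Rmult_lt_reg_r B); auto.
  rewrite Rmult_assoc, Rinv_l by lra. lra.
Qed.

Lemma contM3 (y v e : R) : y < 1 -> 0 < e ->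
  Rabs (v - y) < Rmin ((1 - y) / 2) (e * (1 - y) * (1 - y) / 2) ->
  Rabs (y / (1 - y) - v / (1 - v)) < e.
Proof.
  intros Hy He Hv.
  assert (H1 := Rmin_l ((1 - y) / 2) (e * (1 - y) * (1 - y) / 2)).
  assert (H2 := Rmin_r ((1 - y) / 2) (e * (1 - y) * (1 - y) / 2)).
  assert (Hv' : Rabs (v - y) < (1 - y) / 2) by lra.
  apply Rabs_def2 in Hv'.
  assert (E : y / (1 - y) - v / (1 - v) = (y - v) * / ((1 - y) * (1 - v))) by (field; lra).
  rewrite E, Rabs_mult, Rabs_inv.
  rewrite (Rabs_pos_eq ((1 - y) * (1 - v))) by nra.
  apply frac_lt; [nra|].
  rewrite Rabs_minus_sym.
  assert (e * (1 - y) * (1 - y) / 2 <= e * ((1 - y) * (1 - v))).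
  { assert ((1 - y) * (1 - y) / 2 <= (1 - y) * (1 - v)) by nra. nra. }
  lra.
Qed.

Lemma contM4 (y v e : R) : -1 < y -> 0 < e ->
  Rabs (v - y) < Rmin ((1 + y) / 2) (e * (1 + y) * (1 + y) / 2) ->
  Rabs (- y / (y + 1) - - v / (v + 1)) < e.
Proof.
  intros Hy He Hv.
  assert (H1 := Rmin_l ((1 + y) / 2) (e * (1 + y) * (1 + y) / 2)).
  assert (H2 := Rmin_r ((1 + y) / 2) (e * (1 + y) * (1 + y) / 2)).
  assert (Hv' : Rabs (v - y) < (1 + y) / 2) by lra.
  apply Rabs_def2 in Hv'.
  assert (E : - y / (y + 1) - - v / (v + 1) = (v - y) * / ((1 + y) * (1 + v))) by (field; lra).
  rewrite E, Rabs_mult, Rabs_inv.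
  rewrite (Rabs_pos_eq ((1 + y) * (1 + v))) by nra.
  apply frac_lt; [nra|].
  assert (e * (1 + y) * (1 + y) / 2 <= e * ((1 + y) * (1 + v))).
  { assert ((1 + y) * (1 + y) / 2 <= (1 + y) * (1 + v)) by nra. nra. }
  lra.
Qed.

Definition Far (be : R) (qq : R * R) (m : nat) (e : R) : Prop :=
  forall q, img be m q -> ~ (Rabs (fst qq - fst q) < e /\ Rabs (snd qq - snd q) < e).

Lemma far_exists (be : R) (qq : R * R) (N : nat) :
  (forall m, ~ closure (img be m) qq) -> exists e, 0 < e /\ forall m, (m <= N)%nat -> Far be qq m e.
Proof.
  intros Hn. apply unif.
  - intros m e e' He' F q Hq [A B]. apply (F q Hq). split; lra.
  - intros m _. specialize (Hn m). unfold closure in Hn.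
    apply not_all_ex_not in Hn. destruct Hn as [e He].
    exists e. apply imply_to_and in He. destruct He as [He1 He2]. split; auto.
    intros q Hq Hc. apply He2. exists q. auto.
Qed.

Theorem lemma4p5 (alpha beta x y : R)
  (Hga : (sqrt 5 - 1) / 2 <= alpha) (Hab : alpha < beta) (Hb1 : beta <= 1)
  (Hxy : Omega alpha (x, y)) (Hy : y < 1 - 1 / sqrt 2) :
  exists q, Sset x y q /\ Omega beta q.
Proof.
  assert (S5 : sqrt 5 * sqrt 5 = 5) by (apply sqrt_sqrt; lra).
  assert (S5p : 0 <= sqrt 5) by apply sqrt_pos.
  assert (Hs5 : 2 < sqrt 5) by nra.
  set (g := (sqrt 5 - 1) / 2) in *.
  assert (Hg1 : g * g + g = 1) by (unfold g; nra).
  assert (Hg0 : 0 < g) by (unfold g; lra).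
  assert (H : Hyp alpha beta).
  { unfold Hyp. assert (g * g <= alpha * alpha) by (apply Rmult_le_compat; lra). lra. }
  destruct s2_facts as [S1 S2].
  rewrite inv_s2 in Hy.
  pose proof H as H'. destruct H' as [Ha [Hab' [Hb Hg]]].
  destruct Hxy as [n Hcl].
  assert (Hym : -1 < y).
  { destruct (Hcl (1/2) ltac:(lra)) as [q0 [[x0 [Hx0 E0]] [_ B]]].
    pose proof (orbit_Rg alpha beta x0 n H Hx0) as HR. unfold orbit in HR. rewrite E0 in HR.
    destruct HR as [_ [HRy _]]. simpl in B. apply Rabs_def2 in B. lra. }
  apply NNPP. intro Hno.
  assert (Hn : forall q, Sset x y q -> forall m, ~ closure (img beta m) q).
  { intros q Hq m Hc. apply Hno. exists q. split; auto. exists m. exact Hc. }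
  destruct (far_exists beta (x, y) (2 * n) (Hn _ ltac:(left; reflexivity))) as [e1 [He1 F1]].
  destruct (far_exists beta (-x, -y) (2 * n) (Hn _ ltac:(right; left; reflexivity))) as [e2 [He2 F2]].
  destruct (far_exists beta (x + 1, y / (1 - y)) (2 * n) (Hn _ ltac:(right; right; left; reflexivity))) as [e3 [He3 F3]].
  destruct (far_exists beta (1 - x, - y / (y + 1)) (2 * n) (Hn _ ltac:(right; right; right; reflexivity))) as [e4 [He4 F4]].
  set (e0 := Rmin (Rmin e1 e2) (Rmin e3 e4)).
  assert (He0 : 0 < e0) by (unfold e0; repeat apply Rmin_pos; auto).
  assert (Ee1 : e0 <= e1) by (unfold e0; eapply Rle_trans; [apply Rmin_l| apply Rmin_l]).
  assert (Ee2 : e0 <= e2) by (unfold e0; eapply Rle_trans; [apply Rmin_l| apply Rmin_r]).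
  assert (Ee3 : e0 <= e3) by (unfold e0; eapply Rle_trans; [apply Rmin_r| apply Rmin_l]).
  assert (Ee4 : e0 <= e4) by (unfold e0; eapply Rle_trans; [apply Rmin_r| apply Rmin_r]).
  set (d3 := Rmin ((1 - y) / 2) (e0 * (1 - y) * (1 - y) / 2)).
  set (d4 := Rmin ((1 + y) / 2) (e0 * (1 + y) * (1 + y) / 2)).
  assert (Hd3 : 0 < d3) by (unfold d3; apply Rmin_pos; [lra| apply Rmult_lt_0_compat; [|lra]; apply Rmult_lt_0_compat; [apply Rmult_lt_0_compat|]; lra]).
  assert (Hd4 : 0 < d4) by (unfold d4; apply Rmin_pos; [lra| apply Rmult_lt_0_compat; [|lra]; apply Rmult_lt_0_compat; [apply Rmult_lt_0_compat|]; lra]).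
  set (dl := Rmin (Rmin e0 (1 - sqrt 2 / 2 - y)) (Rmin d3 d4)).
  assert (Hdl : 0 < dl) by (unfold dl; apply Rmin_pos; apply Rmin_pos; auto; lra).
  assert (L1 : dl <= e0) by (unfold dl; eapply Rle_trans; [apply Rmin_l| apply Rmin_l]).
  assert (L2 : dl <= 1 - sqrt 2 / 2 - y) by (unfold dl; eapply Rle_trans; [apply Rmin_l| apply Rmin_r]).
  assert (L3 : dl <= d3) by (unfold dl; eapply Rle_trans; [apply Rmin_r| apply Rmin_l]).
  assert (L4 : dl <= d4) by (unfold dl; eapply Rle_trans; [apply Rmin_r| apply Rmin_r]).
  destruct (Hcl dl Hdl) as [q0 [[x0 [Hx0 E0]] [A B]]].
  simpl in A, B.
  assert (Hq0y : snd q0 < 1 - 1 / sqrt 2).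
  { rewrite inv_s2. apply Rabs_def2 in B. lra. }
  rewrite <- E0 in Hq0y.
  destruct (main_orbit alpha beta x0 n H Hx0 Hq0y) as [q [m [HS [Hm Hi]]]].
  unfold orbit in HS. rewrite E0 in HS.
  destruct q0 as [u v]. simpl in A, B, HS.
  destruct HS as [E|[E|[E|E]]]; subst q.
  - apply (F1 m Hm _ Hi). simpl. split; lra.
  - apply (F2 m Hm _ Hi). simpl.
    replace (- x - - u) with (- (x - u)) by ring. replace (- y - - v) with (- (y - v)) by ring.
    rewrite !Rabs_Ropp. split; lra.
  - apply (F3 m Hm _ Hi). simpl.
    replace (x + 1 - (u + 1)) with (x - u) by ring. split; [lra|].
    apply Rlt_le_trans with e0; [|lra]. apply contM3; try lra.
    rewrite Rabs_minus_sym. fold d3. lra.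
  - apply (F4 m Hm _ Hi). simpl.
    replace (1 - x - (1 - u)) with (- (x - u)) by ring. rewrite Rabs_Ropp. split; [lra|].
    apply Rlt_le_trans with e0; [|lra]. apply contM4; try lra.
    rewrite Rabs_minus_sym. fold d4. lra.
Qed.
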